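(* Let $\mathbf{C}\in\mathbb{R}^{n\times n}$, $\mathbf{c}\in\mathbb{R}^n$, and consider the linear system $\mathbf{C}\mathbf{x}=\mathbf{c}$. Let $\langle\cdot,\cdot\rangle_1$, $\langle\cdot,\cdot\rangle_2$ be two inner products on $\mathbb{R}^n$ with norms $\|\cdot\|_1,\|\cdot\|_2$, and constants $0<\underline{\gamma}\le\overline{\gamma}$ with $\underline{\gamma}\|\mathbf{x}\|_1\le\|\mathbf{x}\|_2\le\overline{\gamma}\|\mathbf{x}\|_1$ for all $\mathbf{x}\in\mathbb{R}^n$. Fix an initial guess $\mathbf{x}^0$ with residual $\mathbf{r}^0=\mathbf{c}-\mathbf{C}\mathbf{x}^0$, and for $p=1,2$ and $m\ge0$ let $\mathbf{x}^m_p\in\mathbf{x}^0+\mathrm{span}\{\mathbf{r}^0,\mathbf{C}\mathbf{r}^0,\dots,\mathbf{C}^{m-1}\mathbf{r}^0\}$ minimise the residual norm $\|\mathbf{c}-\mathbf{C}\mathbf{x}\|_p$ over this affine Krylov space, with residual $\mathbf{r}^m_p=\mathbf{c}-\mathbf{C}\mathbf{x}^m_p$. Suppose that for some $0<\sigma<1$, $\|\mathbf{r}^m_1\|_1\le\sigma^m\|\mathbf{r}^0\|_1$ for all $m\ge0$. Then for all $m\ge0$, $$\|\mathbf{r}^{m+\Delta m}_2\|_2\le\sigma^m\|\mathbf{r}^0\|_2\quad\text{for all integers }\Delta m\ge\frac{\log(\overline{\gamma}/\underline{\gamma})}{\log(\sigma^{-1})}.$$ *)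

(* Defs.v *)
From HB Require Import structures.
From mathcomp Require Import all_boot all_order all_algebra.
From mathcomp Require Import all_classical all_reals.
From mathcomp Require Import exp.
Set Implicit Arguments. Unset Strict Implicit. Unset Printing Implicit Defensive.
Import Order.TTheory GRing.Theory Num.Theory.
Local Open Scope ring_scope.

Definition is_inner_product (R : realType) (n : nat)
    (ip : 'cV[R]_n -> 'cV[R]_n -> R) : Prop :=
  [/\ (forall x y, ip x y = ip y x),
      (forall (a : R) x y z, ip (a *: x + y) z = a * ip x z + ip y z)
    & (forall x, x != 0 -> 0 < ip x x)].

Definition ipnorm (R : realType) (n : nat)
    (ip : 'cV[R]_n -> 'cV[R]_n -> R) (x : 'cV[R]_n) : R :=
  Num.sqrt (ip x x).

Definition in_affine_krylov (R : realType) (n : nat) (C : 'M[R]_n)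
    (x0 r0 : 'cV[R]_n) (m : nat) (x : 'cV[R]_n) : Prop :=
  exists a : 'I_m -> R,
    x = x0 + \sum_(i < m) a i *: iter i (fun v => C *m v) r0.

Definition is_minres_iterate (R : realType) (n : nat)
    (ip : 'cV[R]_n -> 'cV[R]_n -> R) (C : 'M[R]_n) (c x0 : 'cV[R]_n)
    (m : nat) (x : 'cV[R]_n) : Prop :=
  in_affine_krylov C x0 (c - C *m x0) m x /\
  forall y, in_affine_krylov C x0 (c - C *m x0) m y ->
    ipnorm ip (c - C *m x) <= ipnorm ip (c - C *m y).

(* Main.v *)
Require Import Defs.
From HB Require Import structures.
From mathcomp Require Import all_boot all_order all_algebra.
From mathcomp Require Import all_classical all_reals.
From mathcomp Require Import exp.
From mathcomp Require Import ring.
Import Order.TTheory GRing.Theory Num.Theory.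
Local Open Scope ring_scope.

Theorem lemma4p3 (R : realType) (n : nat) (C : 'M[R]_n) (c x0 : 'cV[R]_n)
    (ip1 ip2 : 'cV[R]_n -> 'cV[R]_n -> R) (gl gu sigma : R)
    (xs1 xs2 : nat -> 'cV[R]_n) :
  is_inner_product ip1 -> is_inner_product ip2 ->
  0 < gl -> gl <= gu ->
  (forall x, gl * ipnorm ip1 x <= ipnorm ip2 x /\
             ipnorm ip2 x <= gu * ipnorm ip1 x) ->
  (forall m, is_minres_iterate ip1 C c x0 m (xs1 m)) ->
  (forall m, is_minres_iterate ip2 C c x0 m (xs2 m)) ->
  0 < sigma -> sigma < 1 ->
  (forall m, ipnorm ip1 (c - C *m xs1 m) <= sigma ^+ m * ipnorm ip1 (c - C *m x0)) ->
  forall m dm : nat, ln (gu / gl) / ln (sigma^-1) <= dm%:R ->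
    ipnorm ip2 (c - C *m xs2 (m + dm)%N) <= sigma ^+ m * ipnorm ip2 (c - C *m x0).
Proof.
move=> _ _ gl0 glgu Heq H1 H2 s0 s1 Hconv m dm Hdm.
set r0 := c - C *m x0.
have nn : forall ip (x : 'cV[R]_n), 0 <= ipnorm ip x by move=> ip x; exact: sqrtr_ge0.
have gu0 : 0 < gu by apply: lt_le_trans glgu.
have Kpos : 0 < gu / gl by rewrite divr_gt0.
have si1 : 1 < sigma^-1 by rewrite invf_gt1.
have lns : 0 < ln (sigma^-1) by apply: ln_gt0.
have hK : gu / gl * sigma ^+ dm <= 1.
  have : ln (gu / gl) <= ln ((sigma^-1) ^+ dm).
    rewrite lnXn ?invr_gt0 // -mulr_natl -ler_pdivrMr //.
  move=> h0.
  have h : gu / gl <= sigma^-1 ^+ dm.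
    by rewrite -ler_ln ?posrE ?exprn_gt0 ?invr_gt0.
  rewrite exprVn in h.
  by rewrite -ler_pdivlMr ?exprn_gt0 // div1r.
have step1 : ipnorm ip2 (c - C *m xs2 (m + dm)%N) <= ipnorm ip2 (c - C *m xs1 (m + dm)%N).
  by apply: (H2 _).2; exact: (H1 _).1.
apply: (le_trans step1).
have [_ h2] := Heq (c - C *m xs1 (m + dm)%N).
apply: (le_trans h2).
have h3 := Hconv (m + dm)%N.
have [h4 _] := Heq r0.
have h5 : ipnorm ip1 r0 <= ipnorm ip2 r0 / gl by rewrite ler_pdivlMr // mulrC.
apply: (le_trans (ler_wpM2l (ltW gu0) h3)).
apply: (le_trans (ler_wpM2l (ltW gu0) (ler_wpM2l (exprn_ge0 _ (ltW s0)) h5))).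
have -> : gu * (sigma ^+ (m + dm) * (ipnorm ip2 r0 / gl)) =
          (gu / gl * sigma ^+ dm) * (sigma ^+ m * ipnorm ip2 r0).
  rewrite exprD; move: (ipnorm ip2 r0) (sigma ^+ m) (sigma ^+ dm) => a b d.
  ring.
rewrite -[X in _ <= X]mul1r; apply: ler_wpM2r => //.
by rewrite mulr_ge0 ?exprn_ge0 ?nn // ltW.
Qed.
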